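(* Let $\mathbf V$ be a monoid variety satisfying the identities $xyx\approx xyx^2$, $xyx\approx x^2yx$ and $(xy)^2\approx (yx)^2$. If $M_\gamma(x^+tyy^+x^+)\notin\mathbf V$, then $\mathbf V$ satisfies the identity $xty^2x\approx xtxy^2x$.
   Context: Words are elements of the free monoid $\mathfrak X^\ast$ over a countably infinite alphabet $\mathfrak X$. A letter is simple in a word if it occurs exactly once. The congruence $\gamma$ on $\mathfrak X^\ast$: $\mathbf u\mathrel\gamma\mathbf v$ iff $\mathbf u,\mathbf v$ have the same set of simple letters and $\mathbf u$ is obtained from $\mathbf v$ by changing the individual exponents of letters (i.e. $\mathbf u=x_1^{e_1}\cdots x_r^{e_r}$, $\mathbf v=x_1^{f_1}\cdots x_r^{f_r}$ with $e_i,f_i\ge1$). For $\gamma$-classes write $\mathtt v\le\mathtt u$ if $\mathtt u=\mathtt p\mathtt v\mathtt s$ for some $\gamma$-classes $\mathtt p,\mathtt s$. For a set $\mathtt W$ of $\gamma$-classes, $M_\gamma(\mathtt W)$ is the Rees quotient of $\mathfrak X^\ast/\gamma$ by the ideal of $\gamma$-classes not $\le$ any member of $\mathtt W$. With $x^+=\{x^k\mid k\ge1\}$, $x^+tyy^+x^+$ denotes the $\gamma$-class of $xty^2x$, and $M_\gamma(x^+tyy^+x^+)=M_\gamma(\{x^+tyy^+x^+\})$. *)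

(* Defs.v *)
From Stdlib Require Import IndefiniteDescription.
From mathcomp Require Import all_boot.
Set Implicit Arguments. Unset Strict Implicit. Unset Printing Implicit Defensive.

Definition word := seq nat.

Record monoid := Monoid {
  mcarrier :> Type;
  mmul : mcarrier -> mcarrier -> mcarrier;
  mone : mcarrier }.

Definition is_monoid (M : monoid) : Prop :=
  [/\ (forall a b c : M, mmul a (mmul b c) = mmul (mmul a b) c),
      (forall a : M, mmul (mone M) a = a) &
      (forall a : M, mmul a (mone M) = a)].

Definition eval (M : monoid) (f : nat -> M) (w : word) : M :=
  foldr (fun x acc => mmul (f x) acc) (mone M) w.

Definition sat_id (M : monoid) (u v : word) : Prop :=
  forall f : nat -> M, eval f u = eval f v.

(** A monoid variety, presented (Birkhoff) as the class of all monoids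
    satisfying a set Sigma of identities. *)
Definition in_variety (Sigma : word -> word -> Prop) (M : monoid) : Prop :=
  is_monoid M /\ forall u v, Sigma u v -> sat_id M u v.

Definition variety_sat (Sigma : word -> word -> Prop) (u v : word) : Prop :=
  forall M : monoid, in_variety Sigma M -> sat_id M u v.

Definition expand (xs es : seq nat) : word :=
  flatten [seq nseq e.2 e.1 | e <- zip xs es].

(** u = x1^e1 ... xr^er and v = x1^f1 ... xr^fr with all ei, fi >= 1. *)
Definition exp_change (u v : word) : Prop :=
  exists xs es fs : seq nat,
    [/\ size es = size xs /\ size fs = size xs,
        all (fun e => 0 < e) es && all (fun e => 0 < e) fs,
        u = expand xs es & v = expand xs fs].

Definition simple (x : nat) (w : word) : bool := count_mem x w == 1.

Definition gamma (u v : word) : Prop :=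
  (forall x, simple x u = simple x v) /\ exp_change u v.

Definition le_class (v u : word) : Prop :=
  exists p s : word, gamma u (p ++ v ++ s).

(** W : the set of words whose gamma-classes are the members of the set W.
    [u] lies in the ideal iff it is not <= any member of W. *)
Definition in_ideal (W : word -> Prop) (u : word) : Prop :=
  ~ (exists w, W w /\ le_class u w).

Definition rees (W : word -> Prop) (u v : word) : Prop :=
  gamma u v \/ (in_ideal W u /\ in_ideal W v).

Definition qcarrier (R : word -> word -> Prop) : Type :=
  {P : word -> Prop | exists u, P = R u}.

Definition qclass (R : word -> word -> Prop) (u : word) : qcarrier R :=
  exist (fun P => exists v, P = R v) (R u) (ex_intro (fun v => R u = R v) u erefl).

Definition qrep (R : word -> word -> Prop) (c : qcarrier R) : word :=
  proj1_sig (constructive_indefinite_description _ (proj2_sig c)).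

Definition quot_monoid (R : word -> word -> Prop) : monoid :=
  @Monoid (qcarrier R) (fun a b => qclass R (qrep a ++ qrep b)) (qclass R [::]).

Definition M_gamma (W : word -> Prop) : monoid := quot_monoid (rees W).

(** Letters: x = 0, t = 1, y = 2.  The gamma-class x^+ t y y^+ x^+ of x t y^2 x. *)
Definition W_xtyyx : word -> Prop := gamma [:: 0; 1; 2; 2; 0].

(* Main.v *)
Require Import Defs.
From mathcomp Require Import all_boot.
From Stdlib Require Import IndefiniteDescription Classical ProofIrrelevance FunctionalExtensionality PropExtensionality.
From mathcomp Require Import zify.
Set Implicit Arguments. Unset Strict Implicit. Unset Printing Implicit Defensive.

Definition cm (c : nat) (s : seq nat) : seq nat :=
  if s is c' :: _ then (if c == c' then s else c :: s) else [:: c].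
Definition compress (w : seq nat) := foldr cm [::] w.

Lemma cm_idem c X : cm c (cm c X) = cm c X.
Proof. by case: X => [|d X] /=; [rewrite eqxx | case: eqP => [->|_] /=; rewrite eqxx]. Qed.

Lemma foldr_cm c S r : foldr cm S (cm c r) = cm c (foldr cm S r).
Proof.
case: r => [|d r] //=.
case: eqP => [->|_] //=; by rewrite cm_idem.
Qed.

Lemma compress_cat u v : compress (u ++ v) = foldr cm (compress v) (compress u).
Proof.
elim: u => [|c u IH] //=.
by rewrite IH foldr_cm.
Qed.

Lemma compress_nseq e x : 0 < e -> compress (nseq e x) = [:: x].
Proof.
elim: e => [|e IH] //= _.
case: e IH => [|e] IH //=.
by rewrite cm_idem; exact: IH.
Qed.

Lemma compress_expand xs es : size es = size xs -> all (fun e => 0 < e) es ->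
  compress (expand xs es) = compress xs.
Proof.
elim: xs es => [|x xs IH] [|e es] //= [Hs] /andP[He Hes].
rewrite /expand /= -/(expand xs es) compress_cat compress_nseq //= IH //.
Qed.

Lemma gamma_compress u v : gamma u v -> compress u = compress v.
Proof.
case=> _ [xs [es [fs [[H1 H2] /andP[P1 P2] -> ->]]]].
by rewrite !compress_expand.
Qed.

Definition rl (c : nat) (r : seq (nat * nat)) : seq (nat * nat) :=
  if r is (c', n) :: r' then (if c == c' then (c, n.+1) :: r' else (c, 1) :: r)
  else [:: (c, 1)].
Definition rle (w : seq nat) := foldr rl [::] w.

Lemma rle_fst w : map fst (rle w) = compress w.
Proof.
elim: w => [|c w IH] //=; rewrite -IH.
case: (rle w) => [|[d n] r] //=.
by case: eqP => [->|_].
Qed.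

Lemma rle_flat w : flatten [seq nseq p.2 p.1 | p <- rle w] = w.
Proof.
elim: w => [|c w IH] //=; rewrite -[in RHS]IH.
case: (rle w) => [|[d n] r] //=.
by case: eqP => [->|_].
Qed.

Lemma rle_pos w : all (fun e => 0 < e) (map snd (rle w)).
Proof.
elim: w => [|c w IH] //=.
move: IH; case: (rle w) => [|[d n] r] //=.
by case: eqP => [->|_] //= /andP[_ ->].
Qed.

Lemma expand_rle w : expand (map fst (rle w)) (map snd (rle w)) = w.
Proof. by rewrite /expand zip_unzip rle_flat. Qed.

Lemma compress_exp u v : compress u = compress v -> exp_change u v.
Proof.
move=> E; exists (compress u), (map snd (rle u)), (map snd (rle v)).
split.
- have Su : size (compress u) = size (rle u) by rewrite -rle_fst size_map.
  have Sv : size (compress v) = size (rle v) by rewrite -rle_fst size_map.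
  by split; rewrite size_map; [rewrite Su | rewrite -Sv E].
- by rewrite !rle_pos.
- by rewrite -rle_fst expand_rle.
- by rewrite E -rle_fst expand_rle.
Qed.

Lemma mem_cm x c s : (x \in cm c s) = (x == c) || (x \in s).
Proof.
case: s => [|d s] /=; first by rewrite !inE orbF.
case: eqP => [->|_]; last by rewrite inE.
by rewrite !inE; case: eqP => // ->; rewrite eqxx.
Qed.

Lemma mem_compress x w : (x \in compress w) = (x \in w).
Proof. by elim: w => [|c w IH] //=; rewrite mem_cm IH inE. Qed.

Lemma gammaP u v : gamma u v <-> (forall x, simple x u = simple x v) /\ compress u = compress v.
Proof.
split; first by move=> H; split; [case: H | exact: gamma_compress].
by case=> H1 H2; split => //; apply: compress_exp.
Qed.

Lemma count0_compress x u v : compress u = compress v ->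
  (count_mem x u == 0) = (count_mem x v == 0).
Proof.
move=> E.
have M : (x \in u) = (x \in v) by rewrite -(mem_compress x u) -(mem_compress x v) E.
by apply/eqP/eqP => /count_memPn H; apply/count_memPn; rewrite ?M // -M.
Qed.

Lemma add_eq1 a b m n : (m == 0) = (n == 0) -> (m == 1) = (n == 1) ->
  (a + m + b == 1) = (a + n + b == 1).
Proof.
case: m => [|[|m]]; case: n => [|[|n]] //= H0 H1; try discriminate.
by rewrite !addnS !addSn.
Qed.

Lemma gamma_refl u : gamma u u.
Proof. by apply/gammaP. Qed.
Lemma gamma_sym u v : gamma u v -> gamma v u.
Proof. by move/gammaP=> [H1 H2]; apply/gammaP; split. Qed.
Lemma gamma_trans u v w : gamma u v -> gamma v w -> gamma u w.
Proof.
move/gammaP=> [H1 H2] /gammaP [H3 H4]; apply/gammaP; split; last by rewrite H2.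
by move=> x; rewrite H1.
Qed.
Lemma gamma_ctx p s u v : gamma u v -> gamma (p ++ u ++ s) (p ++ v ++ s).
Proof.
move/gammaP=> [H1 H2]; apply/gammaP; split; last by rewrite !compress_cat H2.
move=> x; rewrite /simple !count_cat addnA [in RHS]addnA; apply: add_eq1.
- exact: count0_compress.
- exact: H1.
Qed.

Definition cmq (c : nat) (s : seq nat) : seq nat :=
  if s is c' :: _ then (if (c == c') && (c != 1) then s else c :: s) else [:: c].
Definition cmp (w : seq nat) := foldr cmq [::] w.
Definition Qw := [:: 0; 2; 0; 2].
Definition canon (w : seq nat) := let c := cmp w in if size c <= 3 then c else Qw.
Definition all02 (w : seq nat) := all (fun n => (n == 0) || (n == 2)) w.
Definition all012 (w : seq nat) := all (fun n => n <= 2) w.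
Definition swp (n : nat) := if n == 0 then 2 else if n == 2 then 0 else n.
Definition swapw (w : seq nat) := map swp w.
Definition del (n : nat) (w : seq nat) := filter (predC1 n) w.
Definition p1 w := del 0 (del 2 w).
Definition p2 w := cmp (del 0 (del 1 w)).
Definition p12 w := cmp (del 0 w).
Definition p02 w := canon (del 1 w).
Definition P1pairs : seq (seq nat * seq nat) := [:: ([::], [:: 1]); ([:: 1], [::])].
Definition P2pairs : seq (seq nat * seq nat) := [:: ([::], [:: 2]); ([:: 2], [::])].
Definition L1pairs : seq (seq nat * seq nat) :=
  [:: ([:: 1; 2], [:: 2; 1]); ([:: 2; 1], [:: 1; 2]); ([:: 1; 2], [:: 2; 1; 2]);
      ([:: 2; 1; 2], [:: 1; 2]); ([:: 2; 1], [:: 2; 1; 2]); ([:: 2; 1; 2], [:: 2; 1])].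
Definition L2pairs : seq (seq nat * seq nat) :=
  [:: ([:: 2; 0], [:: 0; 2]); ([:: 0; 2], [:: 2; 0]);
      ([:: 2; 0], [:: 0; 2; 0]); ([:: 0; 2; 0], [:: 2; 0]);
      ([:: 2; 0], [:: 2; 0; 2]); ([:: 2; 0; 2], [:: 2; 0]);
      ([:: 2; 0], Qw); (Qw, [:: 2; 0])].
Definition Fpairs : seq (seq nat * seq nat) :=
  [:: ([:: 0; 1; 2; 0], [:: 0; 1; 0; 2; 0]); ([:: 0; 1; 0; 2; 0], [:: 0; 1; 2; 0]);
      ([:: 0; 1; 2; 0], [:: 0; 1; 2; 0; 2]); ([:: 0; 1; 2; 0; 2], [:: 0; 1; 2; 0]);
      ([:: 0; 1; 2; 0], [:: 0; 1; 0; 2; 0; 2]); ([:: 0; 1; 0; 2; 0; 2], [:: 0; 1; 2; 0])].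
Definition goodA (u v : seq nat) : bool :=
  [|| (p1 u, p1 v) \in P1pairs, (p2 u, p2 v) \in P2pairs, (p12 u, p12 v) \in L1pairs,
      (p02 u, p02 v) \in L2pairs | (u, v) \in Fpairs].
Definition good (u v : seq nat) : bool :=
  all012 u && all012 v && (goodA u v || goodA (swapw u) (swapw v)).

Definition canon_list : seq (seq nat) :=
  [:: [::]; [:: 0]; [:: 2]; [:: 0; 2]; [:: 2; 0]; [:: 0; 2; 0]; [:: 2; 0; 2]; Qw].
Definition infix_list : seq (seq nat) :=
  [:: [::]; [:: 0]; [:: 1]; [:: 2]; [:: 0; 1]; [:: 1; 2]; [:: 2; 0]; [:: 0; 1; 2];
      [:: 1; 2; 0]; [:: 0; 1; 2; 0]].
Definition check_t (c : seq nat) : bool :=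
  let A1 := take (index 1 c) c in let A2 := drop (index 1 c).+1 c in
  all (fun c1 => all (fun c2 => good c (c1 ++ 1 :: c2) || ((c1 == A1) && (c2 == A2)))
    canon_list) canon_list.
Definition check_n (c : seq nat) : bool :=
  all (fun c' => good c c' || (c' == c)) canon_list.
Definition check_all : bool :=
  all (fun c => if 1 \in c then check_t c else check_n c) infix_list.

Lemma check_all_true : check_all = true.
Proof. by vm_compute. Qed.

Lemma cmq_cm c s : c != 1 -> cmq c s = cm c s.
Proof. by case: s => [|d s] //= /negbTE ->; rewrite andbT. Qed.

Lemma cmp_compress w : 1 \notin w -> cmp w = compress w.
Proof.
elim: w => [|c w IH] //=; rewrite inE negb_or eq_sym => /andP[Hc Hw].
by rewrite IH // cmq_cm.
Qed.

Lemma cmp_sorted w : all02 w -> all02 (cmp w) && sorted (fun a b => a != b) (cmp w).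
Proof.
rewrite /all02; elim: w => [|c w IH] //= /andP[Hc Hw]; move: (IH Hw) => /andP[A S].
have c1 : c != 1 by case/orP: Hc => /eqP->.
rewrite cmq_cm //.
case: (cmp w) A S => [|d s] /=; first by rewrite Hc.
move=> /andP[Hd Hs] S; case: eqP => [E|/eqP ne] /=.
  by rewrite -E Hc Hs; rewrite -E in S.
by rewrite Hc Hd Hs ne S.
Qed.

Lemma canon_in w : all02 w -> canon w \in canon_list.
Proof.
move/cmp_sorted; rewrite /canon /all02; case: (cmp w) => [|a [|b [|d [|e r]]]] //=.
- by rewrite andbT => /andP[/orP[]/eqP-> _].
- by case/and3P => /and3P[/orP[]/eqP-> /orP[]/eqP-> _].
- by case/and4P => /and4P[/orP[]/eqP-> /orP[]/eqP-> /orP[]/eqP-> _].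
Qed.

Lemma cm_sorted c s : sorted (fun a b => a != b) s -> sorted (fun a b => a != b) (cm c s).
Proof.
case: s => [|d s] //=; case: eqP => [_|/eqP ne] //= ->; by rewrite ne.
Qed.

Lemma compress_sorted w : sorted (fun a b => a != b) (compress w).
Proof. by elim: w => [|c w IH] //=; apply: cm_sorted. Qed.

Lemma foldr_cm_suffix r X : exists P, foldr cm X r = P ++ X.
Proof.
elim: r => [|c r [P IH]] /=; first by exists [::].
rewrite IH; case: P IH => [|d P] IH /=.
  case: X IH => [|e X] IH /=; first by exists [:: c].
  by case: eqP => _; [exists [::] | exists [:: c]].
by case: eqP => _; [exists (d :: P) | exists [:: c, d & P]].
Qed.

Lemma foldr_cm_prefix r S : sorted (fun a b => a != b) r ->
  exists S', foldr cm S r = r ++ S'.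
Proof.
elim: r => [|c r IH] /=; first by exists S.
move=> Hs; have [S'' E] := IH (path_sorted Hs); rewrite E.
case: r Hs IH E => [|d r] Hs IH E /=.
  case: S'' E => [|e S3] E /=; first by exists [::].
  by case: eqP => [->|_]; [exists S3 | exists [:: e & S3]].
by move: Hs => /= /andP[/negbTE -> _]; exists S''.
Qed.

Lemma compress_infix p x s : exists P S, compress (p ++ x ++ s) = P ++ compress x ++ S.
Proof.
rewrite compress_cat; have [P ->] := foldr_cm_suffix (compress p) (compress (x ++ s)).
rewrite compress_cat; have [S ->] := foldr_cm_prefix (compress s) (compress_sorted x).
by exists P, S.
Qed.

Lemma infix_mem P c S : [:: 0; 1; 2; 0] = P ++ c ++ S -> c \in infix_list.
Proof.
move=> E; have -> : c = take (size c) (drop (size P) [:: 0; 1; 2; 0]).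
  by rewrite E drop_size_cat // take_size_cat.
by case: (size P) => [|[|[|[|m]]]]; case: (size c) => [|[|[|[|n]]]].
Qed.

Lemma ideal_facts x : ~ in_ideal W_xtyyx x ->
  compress x \in infix_list /\ count_mem 1 x <= 1.
Proof.
move=> H; have [w [Hw [p [s Hs]]]] : exists w, W_xtyyx w /\ le_class x w.
  by apply: NNPP => H'; apply: H.
have G := gamma_trans Hw Hs.
split.
  have [P [S E]] := compress_infix p x s.
  by apply: (infix_mem (P := P) (S := S)); rewrite -E -(gamma_compress G).
move/gammaP: G => [G _]; have := G 1; rewrite /simple /= => /esym/eqP.
move=> E; rewrite -[X in _ <= X]E !count_cat.
exact: leq_trans (leq_addr _ _) (leq_addl _ _).
Qed.

Lemma split1 w : count_mem 1 w = 1 ->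
  exists w1 w2, [/\ w = w1 ++ 1 :: w2, 1 \notin w1 & 1 \notin w2].
Proof.
move=> H.
have Hin : 1 \in w by rewrite -has_pred1 has_count H.
exists (take (index 1 w) w), (drop (index 1 w).+1 w).
have E : w = take (index 1 w) w ++ 1 :: drop (index 1 w).+1 w.
  by rewrite -{2}(nth_index 0 Hin) -drop_nth ?index_mem // cat_take_drop.
have := H; rewrite {1}E count_cat /= => C.
move: C; rewrite addnCA add1n => /succn_inj /eqP; rewrite addn_eq0 => /andP[/eqP A /eqP B].
by split => //; apply/count_memPn.
Qed.

Lemma foldr_cm_one r S : sorted (fun a b => a != b) r -> 1 \notin r ->
  foldr cm (1 :: S) r = r ++ 1 :: S.
Proof.
elim: r => [|c r IH] //= Hs; rewrite inE negb_or => /andP[c1 Hr].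
rewrite IH ?(path_sorted Hs) //.
case: r Hs IH Hr => [|d r] /= Hs IH Hr; first by rewrite eq_sym (negbTE c1).
by move: Hs => /andP[/negbTE -> _].
Qed.

Lemma compress_split X Y : 1 \notin X -> 1 \notin Y ->
  compress (X ++ 1 :: Y) = compress X ++ 1 :: compress Y.
Proof.
move=> HX HY; rewrite compress_cat /=.
have -> : cm 1 (compress Y) = 1 :: compress Y.
  have : 1 \notin compress Y by rewrite mem_compress.
  by case: (compress Y) => [|d s] //=; rewrite inE negb_or eq_sym => /andP[/negbTE ->].
by apply: foldr_cm_one; [exact: compress_sorted | rewrite mem_compress].
Qed.

Lemma take_drop1 X Y : 1 \notin X ->
  take (index 1 (X ++ 1 :: Y)) (X ++ 1 :: Y) = X /\ drop (index 1 (X ++ 1 :: Y)).+1 (X ++ 1 :: Y) = Y.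
Proof.
move=> HX; rewrite index_cat (negbTE HX) /= ?eqxx ?addn0.
split; first exact: take_size_cat. by rewrite -add1n -drop_drop drop_size_cat; case: Y.
Qed.

Lemma infix_size c : c \in infix_list -> size c <= 4.
Proof. by rewrite !inE => /orP-[]; repeat case/orP; move/eqP->. Qed.

Lemma check_t_spec X Y c1 c2 : check_t (X ++ 1 :: Y) -> 1 \notin X ->
  c1 \in canon_list -> c2 \in canon_list ->
  good (X ++ 1 :: Y) (c1 ++ 1 :: c2) || ((c1 == X) && (c2 == Y)).
Proof.
move=> H nX h1 h2; have [T1 T2] := take_drop1 Y nX.
by move: H; rewrite /check_t T1 T2 => /allP/(_ c1 h1)/allP/(_ c2 h2).
Qed.

Lemma check_n_spec c c' : check_n c -> c' \in canon_list -> good c c' || (c' == c).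
Proof. by move=> /allP H /H. Qed.

Lemma check_mem c : c \in infix_list -> if 1 \in c then check_t c else check_n c.
Proof. by move=> Hc; have /allP := check_all_true; apply. Qed.

Lemma canon_compress B : 1 \notin B -> size (compress B) <= 3 -> canon B = compress B.
Proof. by move=> nB Hs; rewrite /canon cmp_compress // Hs. Qed.

Lemma canon_short B X : 1 \notin B -> size X <= 3 -> canon B = X -> compress B = X.
Proof.
move=> nB HX; rewrite /canon cmp_compress //.
by case: leqP => // _ E; rewrite -E in HX.
Qed.

Lemma infix_no1 c : c \in infix_list -> 1 \notin c -> size c <= 3.
Proof.
move=> Hc; have K : all (fun c => (1 \in c) || (size c <= 3)) infix_list by [].
by move: (allP K c Hc) => /orP[->|].
Qed.

Section Rees.
Variable Wd : word -> Prop.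

Lemma ideal_gamma u v : gamma u v -> in_ideal Wd u -> in_ideal Wd v.
Proof.
move=> G I [w [Hw [p [s Hs]]]]; apply: I; exists w; split => //; exists p, s.
exact: (gamma_trans Hs (gamma_sym (gamma_ctx p s G))).
Qed.

Lemma ideal_ctx p s u : in_ideal Wd u -> in_ideal Wd (p ++ u ++ s).
Proof.
move=> I [w [Hw [p' [s' Hs]]]]; apply: I; exists w; split => //; exists (p' ++ p), (s ++ s').
by move: Hs; rewrite -!catA.
Qed.

Lemma rees_refl u : rees Wd u u.
Proof. by left; apply: gamma_refl. Qed.
Lemma rees_sym u v : rees Wd u v -> rees Wd v u.
Proof. by case=> [G|[I J]]; [left; apply: gamma_sym | right]. Qed.
Lemma rees_trans u v w : rees Wd u v -> rees Wd v w -> rees Wd u w.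
Proof.
case=> [G|[I J]] [G'|[I' J']].
- by left; apply: gamma_trans G G'.
- by right; split => //; apply: ideal_gamma (gamma_sym G) I'.
- by right; split => //; apply: ideal_gamma G' J.
- by right.
Qed.
Lemma rees_ctx p s u v : rees Wd u v -> rees Wd (p ++ u ++ s) (p ++ v ++ s).
Proof.
case=> [G|[I J]]; first by left; apply: gamma_ctx.
by right; split; apply: ideal_ctx.
Qed.

Local Notation R := (rees Wd).

Lemma exist_eq (A : Type) (Pr : A -> Prop) (a b : A) (ha : Pr a) (hb : Pr b) :
  a = b -> exist Pr a ha = exist Pr b hb.
Proof. by move=> E; subst; rewrite (proof_irrelevance _ ha hb). Qed.

Lemma qclass_eq u v : R u v -> qclass R u = qclass R v.
Proof.
move=> H; rewrite /qclass.
have E : R u = R v.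
  apply: functional_extensionality => w; apply: propositional_extensionality.
  split => [Hu|Hv]; [exact: rees_trans (rees_sym H) Hu | exact: rees_trans H Hv].
exact: exist_eq.
Qed.

Lemma qclass_inj u v : qclass R u = qclass R v -> R u v.
Proof.
move=> H; have : proj1_sig (qclass R u) v = proj1_sig (qclass R v) v by rewrite H.
by move=> /= ->; apply: rees_refl.
Qed.

Lemma qrep_spec u : R (qrep (qclass R u)) u.
Proof.
rewrite /qrep; case: constructive_indefinite_description => v /= Hv.
by rewrite -Hv; apply: rees_refl.
Qed.

Lemma qclass_rep c : qclass R (qrep c) = c.
Proof.
case: c => P HP; rewrite /qrep /=.
case: constructive_indefinite_description => v /= Hv; subst P.
rewrite /qclass; congr exist; exact: proof_irrelevance.
Qed.

Lemma Mg_monoid : is_monoid (M_gamma Wd).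
Proof.
split.
- move=> a b c /=.
  transitivity (qclass R (qrep a ++ (qrep b ++ qrep c))).
    apply: qclass_eq; have := rees_ctx (qrep a) [::] (qrep_spec (qrep b ++ qrep c)).
    by rewrite !cats0.
  rewrite catA; apply: qclass_eq; apply: rees_sym.
  exact: (rees_ctx [::] (qrep c) (qrep_spec (qrep a ++ qrep b))).
- move=> a /=.
  rewrite -{2}(qclass_rep a); apply: qclass_eq.
  rewrite -[_ ++ qrep a]cat0s -[qrep a]cat0s.
  exact: (rees_ctx [::] (qrep a) (qrep_spec [::])).
- move=> a /=.
  rewrite -{2}(qclass_rep a); apply: qclass_eq.
  have := rees_ctx (qrep a) [::] (qrep_spec [::]).
  by rewrite !cats0.
Qed.

Lemma eval_q (f : nat -> M_gamma Wd) w :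
  eval f w = qclass R (flatten [seq qrep (f n) | n <- w]).
Proof.
elim: w => [|n w IH] //=; rewrite IH /=.
apply: qclass_eq; have := rees_ctx (qrep (f n)) [::] (qrep_spec (flatten [seq qrep (f n) | n <- w])).
by rewrite !cats0.
Qed.
End Rees.

Section Alg.
Variable M : monoid.
Hypothesis HM : is_monoid M.
Local Notation "a * b" := (mmul a b).
Local Notation one := (mone M).

Definition prod (l : seq M) : M := foldr (fun a acc => a * acc) one l.
Arguments prod : simpl never.

Lemma mulA (a b c : M) : a * (b * c) = (a * b) * c.
Proof. by case: HM. Qed.
Lemma mul1l (a : M) : one * a = a.
Proof. by case: HM. Qed.
Lemma mul1r (a : M) : a * one = a.
Proof. by case: HM. Qed.

Lemma prod_cons a l : prod (a :: l) = a * prod l.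
Proof. by []. Qed.
Lemma prod_nil : prod [::] = one.
Proof. by []. Qed.
Lemma prod_cat u v : prod (u ++ v) = prod u * prod v.
Proof.
elim: u => [|a u IH]; first by rewrite /= prod_nil mul1l.
by rewrite cat_cons !prod_cons IH mulA.
Qed.
Lemma prod_mul a b l : prod (a * b :: l) = prod (a :: b :: l).
Proof. by rewrite !prod_cons mulA. Qed.

Lemma ctx p s l r : prod l = prod r -> prod (p ++ l ++ s) = prod (p ++ r ++ s).
Proof. by move=> H; rewrite !prod_cat H. Qed.

Hypothesis L1 : forall a b : M, a * (b * (a * one)) = a * (b * (a * (a * one))).
Hypothesis L2 : forall a b : M, a * (b * (a * one)) = a * (a * (b * (a * one))).
Hypothesis L3 : forall a b : M, a * (b * (a * (b * one))) = b * (a * (b * (a * one))).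

Lemma L1l a l : prod (a :: l ++ [:: a]) = prod (a :: l ++ [:: a; a]).
Proof. rewrite !prod_cons !prod_cat. rewrite !prod_cons prod_nil; exact: L1. Qed.
Lemma L2l a l : prod (a :: l ++ [:: a]) = prod (a :: a :: l ++ [:: a]).
Proof. rewrite !prod_cons !prod_cat !prod_cons prod_nil; exact: L2. Qed.
Lemma L3l l m : prod (l ++ m ++ l ++ m) = prod (m ++ l ++ m ++ l).
Proof. by have := L3 (prod l) (prod m); rewrite !prod_cat !mul1r. Qed.
Lemma D0 a : prod [:: a; a] = prod [:: a; a; a].
Proof. exact: (L1l a [::]). Qed.

Ltac st L p s H := transitivity (prod L);
  [ first [ exact (ctx p s H) | exact (esym (ctx p s H)) ] | ].

Lemma cons_congr a u v : prod u = prod v -> prod (a :: u) = prod (a :: v).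
Proof. by rewrite !prod_cons => ->. Qed.

Ltac solve_ctx H := first [ exact (ctx [::] _ H) | exact (esym (ctx [::] _ H))
  | (apply: cons_congr; solve_ctx H) ].
Ltac stp L H := transitivity (prod L); [ solve_ctx H | ].

Lemma sq_idem x : prod [:: x; x; x; x] = prod [:: x; x].
Proof.
st [:: x; x; x] ([::]:seq M) [:: x] (D0 x).
exact: (esym (D0 x)).
Qed.

Definition T := forall x t y : M, prod [:: x; t; y; y; x] = prod [:: x; t; x; y; y; x].
Definition Tsq := forall x t y : M,
  prod [:: x; x; t; y; y; x; x] = prod [:: x; x; t; x; x; y; y; x; x].

Lemma Tsq_T : Tsq -> T.
Proof.
move=> H x t y.
st [:: x; x; t; y; y; x] ([::]:seq M) ([::]:seq M) (L2l x [:: t; y; y]).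
st [:: x; x; t; y; y; x; x] [:: x] ([::]:seq M) (L1l x [:: t; y; y]).
rewrite H.
stp [:: x; t; x; x; y; y; x; x] (L2l x [:: t; x; x; y; y]).
stp [:: x; t; x; y; y; x; x] (L1l x [:: t]).
exact: (esym (L1l x [:: t; x; y; y])).
Qed.

Definition blk (X Tt Y : seq M) (n : nat) : seq M :=
  if n == 0 then X ++ X else if n == 1 then Tt else if n == 2 then Y ++ Y else [::].
Definition W X Tt Y (w : seq nat) : seq M := flatten (map (blk X Tt Y) w).
Definition Ok (u v : seq nat) := forall x t y : M,
  prod (W [:: x] [:: t] [:: y] u) = prod (W [:: x] [:: t] [:: y] v).

Lemma prodW X Tt Y w :
  prod (W X Tt Y w) = prod (W [:: prod X] [:: prod Tt] [:: prod Y] w).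
Proof.
elim: w => [|n w IH] //=; rewrite /W /= !prod_cat -/(W _ _ _ w) IH; congr (_ * _).
rewrite /blk; case: (n == 0); first by rewrite !prod_cat !prod_cons prod_nil !mul1r.
case: (n == 1); first by rewrite prod_cons prod_nil mul1r.
by case: (n == 2); first by rewrite !prod_cat !prod_cons prod_nil !mul1r.
Qed.

Lemma OkL u v : Ok u v -> forall X Tt Y, prod (W X Tt Y u) = prod (W X Tt Y v).
Proof. by move=> H X Tt Y; rewrite prodW H -prodW. Qed.

Lemma Ok_sym u v : Ok u v -> Ok v u.
Proof. by move=> H x t y; rewrite H. Qed.

Lemma triv_T : (forall z : M, z = one) -> T.
Proof. by move=> H x t y; rewrite [LHS]H [RHS]H. Qed.

Lemma Ltriv_t : Ok [::] [:: 1] -> T.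
Proof.
move=> H; apply: triv_T => z; have := H z z z; rewrite /W /= !prod_cons !prod_nil mul1r.
by move=> ->.
Qed.

Lemma Ltriv_y : Ok [::] [:: 2] -> T.
Proof.
move/OkL=> H; apply: triv_T => z.
have E : prod [:: z] = prod [:: z; z; z].
  stp [:: z; z; z] (H [::] [::] [:: z]). by [].
move: E; rewrite -D0 (esym (H [::] [::] [:: z])) /= prod_cons prod_nil mul1r.
by [].
Qed.

Lemma Lcent : Ok [:: 1; 2] [:: 2; 1] -> T.
Proof.
move/OkL=> H; apply: Tsq_T => x t y; symmetry.
stp [:: x; x; t; y; y; x; x; x; x] (H [::] [:: x; x] [:: y]).
exact: (ctx [:: x; x; t; y; y] [::] (sq_idem x)).
Qed.

Lemma LR : Ok [:: 1; 2] [:: 2; 1; 2] -> T.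
Proof.
move/OkL=> H; apply: Tsq_T => x t y.
stp [:: t; y; y; x; x] (H [::] [:: t; y; y] [:: x]).
symmetry.
stp [:: t; x; x; y; y; x; x] (H [::] [:: t; x; x; y; y] [:: x]).
stp [:: t; y; y; x; x] (H [::] [:: y; y] [:: x]).
by [].
Qed.

Lemma LL : Ok [:: 2; 1] [:: 2; 1; 2] -> T.
Proof.
move/OkL=> H; apply: Tsq_T => x t y.
stp [:: x; x; t; y; y] (H [::] [:: t; y; y] [:: x]).
symmetry.
stp [:: x; x; t; x; x; y; y] (H [::] [:: t; x; x; y; y] [:: x]).
stp [:: x; x; t; y; y] (H [::] [:: t] [:: x]).
by [].
Qed.

Lemma C2 : Ok [:: 2; 0] [:: 0; 2] -> T.
Proof.
move/OkL=> H; apply: Tsq_T => x t y; symmetry.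
stp [:: x; x; t; y; y; x; x; x; x] (H [:: x] [::] [:: y]).
exact: (ctx [:: x; x; t; y; y] [::] (sq_idem x)).
Qed.

Lemma fe_efe : Ok [:: 2; 0] [:: 0; 2; 0] -> T.
Proof.
move/OkL=> H; apply: Tsq_T => x t y; symmetry.
stp [:: x; x; t; y; y; x; x] (H [:: x] [::] [:: y]).
by [].
Qed.

Lemma fe_fef : Ok [:: 2; 0] [:: 2; 0; 2] -> T.
Proof.
move/OkL=> H; apply: C2 => x t y.
rewrite /W /=.
stp [:: y; y; x; x; x; x] (sq_idem x).
stp [:: y; y; x; x; y; y; x; x] (H [:: x] [::] [:: y]).
stp [:: x; x; y; y; x; x; y; y] (L3l [:: y; y] [:: x; x]).
stp [:: x; x; y; y; y; y] (H [:: y] [::] [:: x]).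
stp [:: x; x; y; y] (sq_idem y).
by [].
Qed.

Lemma fe_Q : Ok [:: 2; 0] [:: 0; 2; 0; 2] -> T.
Proof.
move/OkL=> H; apply: fe_efe => x t y.
rewrite /W /=; symmetry.
stp [:: x; x; x; x; y; y; x; x; y; y] (H [:: x] [::] [:: y]).
stp [:: x; x; y; y; x; x; y; y] (sq_idem x).
stp [:: y; y; x; x] (H [:: x] [::] [:: y]).
by [].
Qed.

Lemma N1 : Ok [:: 0; 1; 2; 0] [:: 0; 1; 2; 0; 2] -> T.
Proof.
move/OkL=> H; apply: Tsq_T => x t y; symmetry.
stp [:: x; x; t; x; x; y; y; x; x; y; y] (H [:: x] [:: t; x; x] [:: y]).
stp [:: x; x; t; y; y; x; x; y; y; x; x] (L3l [:: x; x] [:: y; y]).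
stp [:: x; x; t; y; y; x; x; x; x] (H [:: x] [:: t] [:: y]).
stp [:: x; x; t; y; y; x; x] (sq_idem x).
by [].
Qed.

Lemma N2 : Ok [:: 0; 1; 2; 0] [:: 0; 1; 0; 2; 0; 2] -> T.
Proof.
move/OkL=> H; apply: Tsq_T => x t y; symmetry.
stp [:: x; x; t; x; x; x; x; y; y; x; x; y; y] (H [:: x] [:: t; x; x] [:: y]).
stp [:: x; x; t; x; x; y; y; x; x; y; y] (sq_idem x).
stp [:: x; x; t; y; y; x; x] (H [:: x] [:: t] [:: y]).
by [].
Qed.

Lemma D4 : Ok [:: 0; 1; 2; 0] [:: 0; 1; 0; 2; 0] -> T.
Proof. by move/OkL=> H; apply: Tsq_T => x t y; exact: (H [:: x] [:: t] [:: y]). Qed.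


Lemma band_T : (forall z : M, prod [:: z] = prod [:: z; z]) -> T.
Proof.
move=> B.
have bl : forall L, prod L = prod (L ++ L).
  move=> L; rewrite prod_cat; have := B (prod L); rewrite !prod_cons prod_nil !mul1r.
  by [].
have cm : forall a b, prod [:: a; b] = prod [:: b; a].
  move=> a b.
  stp ([:: a; b] ++ [:: a; b]) (bl [:: a; b]).
  stp ([:: b; a] ++ [:: b; a]) (L3l [:: a] [:: b]).
  exact: (esym (bl [:: b; a])).
move=> x t y.
stp [:: x; t; y; x] (bl [:: y]).
stp [:: x; t; x; y] (cm y x).
stp [:: x; x; t; y] (cm t x).
stp [:: x; t; y] (bl [:: x]).
symmetry.
stp [:: x; t; x; y; x] (bl [:: y]).
stp [:: x; t; x; x; y] (cm y x).
stp [:: x; t; x; y] (bl [:: x]).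
stp [:: x; x; t; y] (cm t x).
stp [:: x; t; y] (bl [:: x]).
by [].
Qed.

Lemma pow_ge2 z n : 2 <= n -> prod (nseq n z) = prod [:: z; z].
Proof.
elim: n => [|[|[|n]] IH] //= _.
rewrite prod_cons IH // -prod_cons.
exact: (esym (D0 z)).
Qed.

Lemma pow_T a b : (forall z : M, prod (nseq a z) = prod (nseq b z)) ->
  ((a == 0) != (b == 0)) || ((a == 1) != (b == 1)) -> T.
Proof.
have key : forall b, (forall z : M, prod (nseq 0 z) = prod (nseq b z)) -> 0 < b -> T.
  move=> {}b H Hb; apply: triv_T => z.
  case: b Hb H => [//|[|b]] _ H.
    by have := H z; rewrite /= prod_nil prod_cons prod_nil mul1r.
  have Hz : prod [:: z; z] = prod [::] by rewrite -(pow_ge2 z (_ : 2 <= b.+2)) // -H.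
  have E : prod [:: z] = prod [::].
    stp [:: z; z; z] (esym Hz). stp [:: z; z] (esym (D0 z)). exact Hz.
  by move: E; rewrite prod_cons prod_nil mul1r.
have key1 : forall b, (forall z : M, prod (nseq 1 z) = prod (nseq b z)) -> 2 <= b -> T.
  move=> {}b H Hb; apply: band_T => z.
  by rewrite -(pow_ge2 z Hb) -H.
move=> H.
case: a H => [|[|a]] H; case: b H => [|[|b]] H //=.
- by move=> _; apply: (key 1).
- by move=> _; apply: (key b.+2).
- by move=> _; apply: (key 1) => // z; rewrite H.
- by move=> _; apply: (key1 b.+2).
- by move=> _; apply: (key a.+2) => // z; rewrite H.
- by move=> _; apply: (key1 a.+2) => // z; rewrite H.
Qed.


Lemma W_cat X Tt Y u v : W X Tt Y (u ++ v) = W X Tt Y u ++ W X Tt Y v.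
Proof. by rewrite /W map_cat flatten_cat. Qed.

Lemma W_del0 X Tt Y w : W X Tt Y (del 0 w) = W [::] Tt Y w.
Proof.
elim: w => [|c w IH] //=; rewrite /del /=.
case: (c =P 0) => [->|/eqP ne] /=; first by rewrite -/(del 0 w) IH.
rewrite /W /= -/(W _ _ _ (filter _ w)) -/(del 0 w) IH; congr (_ ++ _).
by rewrite /blk (negbTE ne).
Qed.
Lemma W_del1 X Tt Y w : W X Tt Y (del 1 w) = W X [::] Y w.
Proof.
elim: w => [|c w IH] //=; rewrite /del /=.
case: (c =P 1) => [->|/eqP ne] /=; first by rewrite -/(del 1 w) IH.
rewrite /W /= -/(W _ _ _ (filter _ w)) -/(del 1 w) IH; congr (_ ++ _).
by rewrite /blk (negbTE ne).
Qed.
Lemma W_del2 X Tt Y w : W X Tt Y (del 2 w) = W X Tt [::] w.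
Proof.
elim: w => [|c w IH] //=; rewrite /del /=.
case: (c =P 2) => [->|/eqP ne] /=; first by rewrite -/(del 2 w) IH.
rewrite /W /= -/(W _ _ _ (filter _ w)) -/(del 2 w) IH; congr (_ ++ _).
by rewrite /blk (negbTE ne).
Qed.

Lemma Ok_del0 u v : Ok u v -> Ok (del 0 u) (del 0 v).
Proof. by move/OkL=> H x t y; rewrite !W_del0 H. Qed.
Lemma Ok_del1 u v : Ok u v -> Ok (del 1 u) (del 1 v).
Proof. by move/OkL=> H x t y; rewrite !W_del1 H. Qed.
Lemma Ok_del2 u v : Ok u v -> Ok (del 2 u) (del 2 v).
Proof. by move/OkL=> H x t y; rewrite !W_del2 H. Qed.

Lemma W_swap x t y w : W [:: x] [:: t] [:: y] (swapw w) = W [:: y] [:: t] [:: x] w.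
Proof.
elim: w => [|c w IH] //=; rewrite /W /= -!/(W _ _ _ _) -/(swapw w) IH; congr (_ ++ _).
by case: c => [|[|[|c]]].
Qed.

Lemma Ok_swap u v : Ok u v -> Ok (swapw u) (swapw v).
Proof. by move=> H x t y; rewrite !W_swap H. Qed.

Lemma blk_idem x t y c : c != 1 ->
  prod (blk [:: x] [:: t] [:: y] c ++ blk [:: x] [:: t] [:: y] c) =
  prod (blk [:: x] [:: t] [:: y] c).
Proof.
case: c => [|[|[|c]]] //= _; [exact: sq_idem | exact: sq_idem].
Qed.

Lemma W_cmq x t y c s : prod (W [:: x] [:: t] [:: y] (cmq c s)) =
  prod (blk [:: x] [:: t] [:: y] c ++ W [:: x] [:: t] [:: y] s).
Proof.
case: s => [|d s] //=.
case: ifP => [/andP[/eqP <- c1]|_] //.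
rewrite /W /= -/(W _ _ _ s) catA [RHS]prod_cat blk_idem // -prod_cat //.
Qed.

Lemma W_cmp x t y w : prod (W [:: x] [:: t] [:: y] (cmp w)) = prod (W [:: x] [:: t] [:: y] w).
Proof.
elim: w => [|c w IH] //=.
rewrite W_cmq prod_cat IH -prod_cat //.
Qed.

Lemma Ok_cmp u v : Ok u v -> Ok (cmp u) (cmp v).
Proof. by move=> H x t y; rewrite !W_cmp H. Qed.


Lemma Qcol x t y c : all02 c -> sorted (fun a b => a != b) c -> 3 < size c ->
  prod (W [:: x] [:: t] [:: y] c) = prod (W [:: x] [:: t] [:: y] Qw).
Proof.
elim: c => [|a c IH] //= /andP[Ha Hc] S Hs.
have Sc : sorted (fun a b => a != b) c by move: S; case: (c) => //= ? ? /andP[].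
case: (ltnP 3 (size c)) => Hsz.
  have E := IH Hc Sc Hsz.
  rewrite /W /= -/(W _ _ _ c) prod_cat E -prod_cat.
  case/orP: Ha => /eqP -> /=.
    stp [:: x; x; y; y; x; x; y; y] (sq_idem x). by [].
  stp [:: y; y; y; y; x; x; y; y; x; x] (L3l [:: x; x] [:: y; y]).
  stp [:: y; y; x; x; y; y; x; x] (sq_idem y).
  stp [:: x; x; y; y; x; x; y; y] (L3l [:: y; y] [:: x; x]).
  by [].
clear IH; move: Hs Hsz S Ha Hc; case: c {Sc} => [|b [|d [|e [|f r]]]] //= _ _.
case/and4P => n1 n2 n3 _ /orP[]/eqP Ea /and4P[/orP[]/eqP Eb /orP[]/eqP Ed /orP[]/eqP Ee _];
  subst => //.
exact: (L3l [:: y; y] [:: x; x]).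
Qed.

Lemma W_canon x t y w : all02 w ->
  prod (W [:: x] [:: t] [:: y] (canon w)) = prod (W [:: x] [:: t] [:: y] w).
Proof.
move=> H; rewrite /canon; case: leqP => Hs; first exact: W_cmp.
case/andP: (cmp_sorted H) => A S.
by rewrite -(Qcol x t y A S Hs) W_cmp.
Qed.

Lemma Ok_canon u v : all02 u -> all02 v -> Ok u v -> Ok (canon u) (canon v).
Proof. by move=> Hu Hv H x t y; rewrite !W_canon // H. Qed.


Fixpoint AllP (L : seq (seq nat * seq nat)) : Prop :=
  if L is q :: L' then (Ok q.1 q.2 -> T) /\ AllP L' else True.

Lemma AllP_mem L u v : AllP L -> (u, v) \in L -> Ok u v -> T.
Proof.
elim: L => [|q L IH] //= [Hq HL]; rewrite inE; case/orP; last exact: IH.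
by move/eqP=> E; move: Hq; rewrite -E.
Qed.

Ltac fin H := first [ exact: (Ltriv_t H) | exact: (Ltriv_t (Ok_sym H))
  | exact: (Ltriv_y H) | exact: (Ltriv_y (Ok_sym H))
  | exact: (Lcent H) | exact: (Lcent (Ok_sym H)) | exact: (LR H) | exact: (LR (Ok_sym H))
  | exact: (LL H) | exact: (LL (Ok_sym H)) | exact: (C2 H) | exact: (C2 (Ok_sym H))
  | exact: (fe_efe H) | exact: (fe_efe (Ok_sym H)) | exact: (fe_fef H)
  | exact: (fe_fef (Ok_sym H)) | exact: (fe_Q H) | exact: (fe_Q (Ok_sym H))
  | exact: (D4 H) | exact: (D4 (Ok_sym H)) | exact: (N1 H) | exact: (N1 (Ok_sym H))
  | exact: (N2 H) | exact: (N2 (Ok_sym H)) ].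

Lemma P1_sound u v : (u, v) \in P1pairs -> Ok u v -> T.
Proof. apply: AllP_mem; rewrite /= ?/Qw; repeat split; move=> H; fin H. Qed.
Lemma P2_sound u v : (u, v) \in P2pairs -> Ok u v -> T.
Proof. apply: AllP_mem; rewrite /= ?/Qw; repeat split; move=> H; fin H. Qed.
Lemma L1_sound u v : (u, v) \in L1pairs -> Ok u v -> T.
Proof. apply: AllP_mem; rewrite /= ?/Qw; repeat split; move=> H; fin H. Qed.
Lemma L2_sound u v : (u, v) \in L2pairs -> Ok u v -> T.
Proof. apply: AllP_mem; rewrite /= ?/Qw; repeat split; move=> H; fin H. Qed.
Lemma F_sound u v : (u, v) \in Fpairs -> Ok u v -> T.
Proof. apply: AllP_mem; rewrite /= ?/Qw; repeat split; move=> H; fin H. Qed.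

Lemma all02_del1 u : all012 u -> all02 (del 1 u).
Proof.
rewrite /all012 /all02 /del; elim: u => [|c u IH] //= /andP[Hc Hu].
by case: (c =P 1) => [_|/eqP ne] /=; rewrite IH // andbT; case: c Hc ne => [|[|[|]]].
Qed.

Lemma goodA_sound u v : all012 u -> all012 v -> goodA u v -> Ok u v -> T.
Proof.
move=> Hu Hv G H; move: G; rewrite /goodA.
case/orP; first by move/P1_sound; apply; apply: Ok_del0; apply: Ok_del2.
case/orP; first by move/P2_sound; apply; apply: Ok_cmp; apply: Ok_del0; apply: Ok_del1.
case/orP; first by move/L1_sound; apply; apply: Ok_cmp; apply: Ok_del0.
case/orP; last by move/F_sound; apply.
move/L2_sound; apply; apply: Ok_canon; try exact: all02_del1.
exact: Ok_del1.
Qed.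

Lemma all012_swap u : all012 u -> all012 (swapw u).
Proof.
rewrite /all012; elim: u => [|c u IH] //= /andP[Hc Hu]; rewrite IH // andbT.
by rewrite /swp; case: c Hc => [|[|[|]]].
Qed.

Lemma good_sound u v : good u v -> Ok u v -> T.
Proof.
case/andP=> /andP[Hu Hv] /orP[G|G] H; first exact: goodA_sound G H.
apply: (goodA_sound (all012_swap Hu) (all012_swap Hv) G).
exact: Ok_swap.
Qed.


Lemma eval_prod (f : nat -> M) w : eval f w = prod (map f w).
Proof. by elim: w => //= n w ->. Qed.

Lemma eval_cat (f : nat -> M) u v : eval f (u ++ v) = eval f u * eval f v.
Proof. by rewrite !eval_prod map_cat prod_cat. Qed.

Lemma eval_subst (g : nat -> M) (sg : nat -> seq nat) w :
  eval g (flatten (map sg w)) = eval (fun n => eval g (sg n)) w.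
Proof. by elim: w => [|n w IH] //=; rewrite eval_cat IH. Qed.

Lemma eval_count c (z : M) w :
  eval (fun n => if n == c then z else one) w = prod (nseq (count_mem c w) z).
Proof.
elim: w => [|n w IH] //=; rewrite IH.
by case E: (n == c); rewrite ?mul1l.
Qed.

Lemma eval_W x t y w :
  eval (fun n => prod (blk [:: x] [:: t] [:: y] n)) w = prod (W [:: x] [:: t] [:: y] w).
Proof. by elim: w => [|n w IH] //=; rewrite IH -prod_cat. Qed.

Lemma Ok_split A1 A2 B1 B2 : all02 A1 -> all02 A2 -> all02 B1 -> all02 B2 ->
  Ok (A1 ++ 1 :: A2) (B1 ++ 1 :: B2) ->
  Ok (canon A1 ++ 1 :: canon A2) (canon B1 ++ 1 :: canon B2).
Proof.
move=> a1 a2 b1 b2 H x t y.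
have E : forall X Y, all02 X -> all02 Y -> prod (W [:: x] [:: t] [:: y] (canon X ++ 1 :: canon Y))
   = prod (W [:: x] [:: t] [:: y] (X ++ 1 :: Y)).
  move=> X Y hX hY.
  have W1 : forall X Y, prod (W [:: x] [:: t] [:: y] (X ++ 1 :: Y)) =
     prod (W [:: x] [:: t] [:: y] X) * (t * prod (W [:: x] [:: t] [:: y] Y)).
    by move=> X' Y'; rewrite W_cat prod_cat.
  by rewrite !W1 !W_canon.
by rewrite !E // H.
Qed.

Lemma core (a b : seq nat) : (forall f : nat -> M, eval f a = eval f b) -> ~ gamma a b ->
   compress a \in infix_list -> count_mem 1 a <= 1 -> T.
Proof.
move=> Hab nG Hc H1.
case: (classic T) => [//|nT]; exfalso.
have Hcnt : forall c, (count_mem c a == 0) = (count_mem c b == 0) /\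
                      (count_mem c a == 1) = (count_mem c b == 1).
  move=> c.
  have Hp : forall z : M, prod (nseq (count_mem c a) z) = prod (nseq (count_mem c b) z).
    by move=> z; rewrite -!eval_count Hab.
  have K : ~~ (((count_mem c a == 0) != (count_mem c b == 0)) ||
               ((count_mem c a == 1) != (count_mem c b == 1))).
    by apply/negP => /(pow_T Hp).
  rewrite negb_or !negbK in K.
  by case/andP: K => /eqP -> /eqP ->.
have Gam : compress a = compress b -> gamma a b.
  move=> E; apply/gammaP; split => // x; rewrite /simple; exact: (Hcnt x).2.
have Ok_ab : Ok a b.
  move=> x t y; rewrite -!eval_W; exact: Hab.
have La : forall n, n \in a -> n <= 2.
  move=> n; rewrite -mem_compress => Hn.
  have K : all (fun c => all (fun n => n <= 2) c) infix_list by [].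
  exact: (allP (allP K _ Hc) _ Hn).
have Lb : forall n, n \in b -> n \in a.
  move=> n; rewrite -!has_pred1 !has_count !lt0n.
  by rewrite (Hcnt n).1.
have all02_of : forall w, (forall n, n \in w -> n \in a) -> 1 \notin w -> all02 w.
  move=> w Hw H1w; apply/allP => n Hn; have := La n (Hw n Hn).
  case: n Hn => [|[|[|n]]] // Hn; by rewrite Hn in H1w.
case: (boolP (1 \in a)) => Ha1.
- have ca1 : count_mem 1 a = 1.
    apply/eqP; rewrite eqn_leq H1 /=; by rewrite -has_count has_pred1.
  have cb1 : count_mem 1 b = 1 by have [_ E] := Hcnt 1; apply/eqP; rewrite -E ca1.
  have [A1 [A2 [Ea nA1 nA2]]] := split1 ca1.
  have [B1 [B2 [Eb nB1 nB2]]] := split1 cb1.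
  have hA1 : all02 A1 by apply: all02_of => // n Hn; rewrite Ea mem_cat Hn.
  have hA2 : all02 A2 by apply: all02_of => // n Hn; rewrite Ea mem_cat inE Hn !orbT.
  have hB1 : all02 B1 by apply: all02_of => // n Hn; apply: Lb; rewrite Eb mem_cat Hn.
  have hB2 : all02 B2 by apply: all02_of => // n Hn; apply: Lb; rewrite Eb mem_cat inE Hn !orbT.
  have Hok := Ok_split hA1 hA2 hB1 hB2 (eq_ind _ (fun w => Ok w _) (eq_ind _ (fun w => Ok a w) Ok_ab _ Eb) _ Ea).
  have Eca : compress a = compress A1 ++ 1 :: compress A2 by rewrite Ea compress_split.
  have nc1 : 1 \notin compress A1 by rewrite mem_compress.
  have Sz : size (compress A1 ++ 1 :: compress A2) <= 4.
    by rewrite -Eca; apply: infix_size.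
  rewrite size_cat /= in Sz.
  have S1 : size (compress A1) <= 3 by lia.
  have S2 : size (compress A2) <= 3 by lia.
  have cA1 : canon A1 = compress A1 by apply: canon_compress.
  have cA2 : canon A2 = compress A2 by apply: canon_compress.
  have chk := check_mem Hc; rewrite (mem_compress 1 a) Ha1 Eca in chk.
  have := check_t_spec chk nc1 (canon_in hB1) (canon_in hB2).
  case/orP => [G|/andP[/eqP e1 /eqP e2]].
    by apply: nT; apply: (good_sound G); rewrite -cA1 -cA2.
  apply: nG; apply: Gam; rewrite Eca Eb compress_split //.
  by rewrite (canon_short nB1 S1 e1) (canon_short nB2 S2 e2).
- have ca1 : count_mem 1 a = 0 by apply/count_memPn.
  have cb1 : count_mem 1 b = 0 by have [E _] := Hcnt 1; apply/eqP; rewrite -E ca1.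
  have nb1 : 1 \notin b by apply/count_memPn.
  have ha : all02 a by apply: all02_of.
  have hb : all02 b by apply: all02_of => // n Hn; apply: Lb.
  have Hok := Ok_canon ha hb Ok_ab.
  have nc : 1 \notin compress a by rewrite mem_compress.
  have cA : canon a = compress a by apply: canon_compress => //; apply: infix_no1.
  have chk := check_mem Hc; rewrite (negbTE nc) in chk.
  case/orP: (check_n_spec chk (canon_in hb)) => [G|/eqP e].
    by apply: nT; apply: (good_sound G); rewrite -cA.
  apply: nG; apply: Gam; rewrite (canon_short nb1 _ e) //.
  exact: infix_no1.
Qed.

End Alg.

Theorem lemma4p2 (Sigma : word -> word -> Prop) :
  variety_sat Sigma [:: 0; 1; 0] [:: 0; 1; 0; 0] ->
  variety_sat Sigma [:: 0; 1; 0] [:: 0; 0; 1; 0] ->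
  variety_sat Sigma [:: 0; 1; 0; 1] [:: 1; 0; 1; 0] ->
  ~ in_variety Sigma (M_gamma W_xtyyx) ->
  variety_sat Sigma [:: 0; 1; 2; 2; 0] [:: 0; 1; 0; 2; 2; 0].
Proof.
move=> H1 H2 H3 HnV M HM.
have [HMm HMs] := HM.
have L1 : forall a b : M, mmul a (mmul b (mmul a (mone M))) = mmul a (mmul b (mmul a (mmul a (mone M)))).
  by move=> a b; exact: (H1 M HM (fun n => if n == 0 then a else b)).
have L2 : forall a b : M, mmul a (mmul b (mmul a (mone M))) = mmul a (mmul a (mmul b (mmul a (mone M)))).
  by move=> a b; exact: (H2 M HM (fun n => if n == 0 then a else b)).
have L3 : forall a b : M, mmul a (mmul b (mmul a (mmul b (mone M)))) = mmul b (mmul a (mmul b (mmul a (mone M)))).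
  by move=> a b; exact: (H3 M HM (fun n => if n == 0 then a else b)).
suff Tm : T M by move=> f; exact: (Tm (f 0) (f 1) (f 2)).
have Mgm : is_monoid (M_gamma W_xtyyx) := Mg_monoid W_xtyyx.
have [u [v [Hs nS]]] : exists u v, Sigma u v /\ ~ sat_id (M_gamma W_xtyyx) u v.
  apply: NNPP => Hn; apply: HnV; split => // u v Hs; apply: NNPP => Hns; apply: Hn.
  by exists u, v.
have [f Hf] := not_all_ex_not _ _ nS.
pose a := flatten [seq qrep (f n) | n <- u].
pose b := flatten [seq qrep (f n) | n <- v].
have nR : ~ rees W_xtyyx a b.
  by move=> R; apply: Hf; rewrite !eval_q; exact: qclass_eq.
have Hab : forall g : nat -> M, eval g a = eval g b.
  move=> g; rewrite /a /b !(eval_subst HMm); exact: (HMs u v Hs).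
have nG : ~ gamma a b by move=> G; apply: nR; left.
case: (classic (in_ideal W_xtyyx a)) => Ia.
  have Ib : ~ in_ideal W_xtyyx b by move=> Ib; apply: nR; right.
  have [Hc H1b] := ideal_facts Ib.
  have Hba : forall g : nat -> M, eval g b = eval g a by move=> g; symmetry; apply: Hab.
  have nGba : ~ gamma b a by move=> G; apply: nG; apply: gamma_sym.
  exact: (core HMm L1 L2 L3 Hba nGba Hc H1b).
have [Hc H1a] := ideal_facts Ia.
exact: (core HMm L1 L2 L3 Hab nG).
Qed.
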